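(* Let ${\cal G}^{+a}_{Global}$ denote the class of scheduling games on identical machines of speed $1$ with a global priority list in which every job $i$ has processing-time function $p_i(t)=b_i+at$ with $b_i\ge0$ and a common rate $a>0$. For every integer $m\ge2$ and every real $a>0$ there exists a constant $c=c(m,a)>0$ such that for every integer $n\ge 2m+1$ there is a game in ${\cal G}^{+a}_{Global}$ with $m$ machines and $n$ jobs whose price of anarchy is at least $c\,(1+a)^{n/m}$. That is, $PoA({\cal G}^{+a}_{Global})=\Omega((1+a)^{n/m})$.
   Context: Scheduling game: a finite set $N$ of $n$ jobs (players) and a set $M$ of $m$ machines; machine $j$ has speed $s_j>0$. With a global priority list, all machines share the same bijection $\pi:N\to\{1,\dots,n\}$, and job $u$ has higher priority than $v$ iff $\pi(u)<\pi(v)$. A profile $\sigma\in M^N$ assigns each job to a machine. On machine $j$, the jobs assigned to it, listed in increasing $\pi$-order as $i_1,i_2,\dots$, are processed without idle time: $S_{i_1}(\sigma)=0$, $C_{i_k}(\sigma)=S_{i_k}(\sigma)+p_{i_k}(S_{i_k}(\sigma))/s_j$, $S_{i_{k+1}}(\sigma)=C_{i_k}(\sigma)$. The cost of job $i$ is $C_i(\sigma)$. A pure Nash equilibrium (NE) is a profile in which no job can strictly decrease its completion time by unilaterally changing its machine. Makespan $C_{\max}(\sigma)=\max_iC_i(\sigma)$; $OPT(G)=\min_\sigma C_{\max}(\sigma)$. $PoA(G)=\max_{\sigma\text{ NE}}C_{\max}(\sigma)/OPT(G)$. *)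

(* Defs.v *)
From HB Require Import structures.
From mathcomp Require Import all_boot all_order all_algebra all_fingroup.
From mathcomp Require Import reals exp.
Set Implicit Arguments. Unset Strict Implicit. Unset Printing Implicit Defensive.
Import Order.TTheory GRing.Theory Num.Theory.
Local Open Scope ring_scope.

Definition profile (n m : nat) := {ffun 'I_n -> 'I_m}.

Section Sched.
Variables (R : realType) (n m : nat).
(* s : speeds of machines; p : processing-time functions p_i(t);
   pi : global priority list (u has higher priority than v iff pi u < pi v). *)
Variables (s : 'I_m -> R) (p : 'I_n -> R -> R) (pi : {perm 'I_n}).

Definition predecessors (sg : profile n m) (i : 'I_n) : seq 'I_n :=
  sort (fun u v => (pi u <= pi v)%N)
       [seq u <- enum 'I_n | (sg u == sg i) && (pi u < pi i)%N].

Definition start_time (sg : profile n m) (i : 'I_n) : R :=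
  foldl (fun t u => t + p u t / s (sg u)) 0 (predecessors sg i).

Definition completion (sg : profile n m) (i : 'I_n) : R :=
  start_time sg i + p i (start_time sg i) / s (sg i).

Definition deviate (sg : profile n m) (i : 'I_n) (j : 'I_m) : profile n m :=
  [ffun u => if u == i then j else sg u].

Definition is_NE (sg : profile n m) : bool :=
  [forall i : 'I_n, forall j : 'I_m,
     completion sg i <= completion (deviate sg i j) i].

Definition makespan (sg : profile n m) : R :=
  \big[Num.max/0]_(i : 'I_n) completion sg i.

(* OPT = minimum makespan over all profiles (the initial value of the
   fold is the maximum makespan, so this is the true minimum). *)
Definition max_makespan : R :=
  \big[Num.max/0]_(sg : profile n m) makespan sg.

Definition OPT : R :=
  \big[Num.min/max_makespan]_(sg : profile n m) makespan sg.

Definition PoA : R :=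
  \big[Num.max/0]_(sg : profile n m | is_NE sg) (makespan sg / OPT).
End Sched.

(* Main.v *)
Require Import Defs.
From HB Require Import structures.
From mathcomp Require Import all_boot all_order all_algebra all_fingroup.
From mathcomp Require Import reals exp.
From mathcomp Require Import zify lra.
Import Order.TTheory GRing.Theory Num.Theory.
Set Implicit Arguments. Unset Strict Implicit.
Local Open Scope ring_scope.

Lemma filter_split (n : nat) (s : seq 'I_n) (P : pred 'I_n) (w i : 'I_n) :
  sorted (fun x y : 'I_n => (x < y)%N) s -> w \in s -> P w -> (w < i)%N ->
  [seq u <- s | P u && (u < i)%N] =
  [seq u <- s | P u && (u < w)%N] ++ w :: [seq u <- s | P u && (w < u)%N && (u < i)%N].
Proof.
move=> + + Pw wi; elim: s => [|x s IH] //=.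
rewrite (path_sortedE); last by move=> y x' z; apply: ltn_trans.
case/andP=> allx ss; rewrite in_cons; case: (eqVneq w x) => [e _ | nwx /= ws].
  subst x; rewrite Pw wi ltnn /=.
  have h1 : [seq u <- s | P u && (u < w)%N] = [::].
    rewrite -(filter_pred0 s); apply: eq_in_filter => u us.
    move: (allP allx u us) => /= wu; rewrite /=; apply/negbTE; rewrite negb_and; apply/orP; right.
    by rewrite -leqNgt ltnW.
  rewrite h1 /=; congr (_ :: _); apply: eq_in_filter => u us.
  by move: (allP allx u us) => /= ->; rewrite andbT.
have xw : (x < w)%N := allP allx w ws.
rewrite (IH ss ws) xw (ltn_trans xw wi) /= !andbT.
by rewrite [(w < x)%N]ltnNge (ltnW xw) /= andbF; case: (P x).
Qed.

Section Gen.
Variables (R : realType) (n m : nat) (a : R) (b : 'I_n -> R).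
Hypotheses (ha : 0 <= a) (hb : forall i, 0 <= b i).
Local Notation s1 := (fun _ : 'I_m => (1:R)).
Local Notation pp := (fun i t => b i + a * t).
Local Notation st := (start_time s1 pp 1%g).
Local Notation cp := (completion s1 pp 1%g).
Local Notation ff sg := (fun t u => t + pp u t / s1 (sg u)).

Lemma enum_sorted : sorted (fun x y : 'I_n => (x < y)%N) (enum 'I_n).
Proof. by have := iota_ltn_sorted 0 n; rewrite -val_enum_ord sorted_map. Qed.

Lemma pred_eq (sg : profile n m) i :
  predecessors 1%g sg i = [seq u <- enum 'I_n | (sg u == sg i) && (u < i)%N].
Proof.
rewrite /predecessors sorted_sort.
- by apply: eq_filter => u; rewrite !perm1.
- by move=> y x z; rewrite !perm1; apply: leq_trans.
apply: sorted_filter; first by move=> y x z; rewrite !perm1; apply: leq_trans.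
apply: sub_sorted enum_sorted => x y; rewrite !perm1; exact: ltnW.
Qed.

Lemma foldl_ge (sg : profile n m) t l : 0 <= t -> t <= foldl (ff sg) t l.
Proof.
elim: l t => [|u l IH] t t0 //=.
have h : t <= t + (b u + a * t) / 1 by rewrite divr1 lerDl addr_ge0 // mulr_ge0.
exact: le_trans h (IH _ (le_trans t0 h)).
Qed.

Lemma st_ge0 sg i : 0 <= st sg i.
Proof. exact: foldl_ge. Qed.

Lemma cp_eq sg i : cp sg i = st sg i + (b i + a * st sg i).
Proof. by rewrite /completion divr1. Qed.

Lemma st_split (sg : profile n m) w i : sg w = sg i -> (w < i)%N ->
  st sg i = foldl (ff sg) (cp sg w)
    [seq u <- enum 'I_n | (sg u == sg i) && (w < u)%N && (u < i)%N].
Proof.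
move=> ew wi; rewrite /start_time pred_eq.
rewrite (@filter_split n _ (fun u => sg u == sg i) w i enum_sorted) ?mem_enum ?ew //.
by rewrite foldl_cat /= /completion /start_time pred_eq ew.
Qed.

Lemma st_ge (sg : profile n m) w i : sg w = sg i -> (w < i)%N -> cp sg w <= st sg i.
Proof.
move=> ew wi; rewrite (st_split ew wi); apply: (foldl_ge sg).
by rewrite cp_eq addr_ge0 ?st_ge0 // addr_ge0 // mulr_ge0 // st_ge0.
Qed.

Lemma st_imm (sg : profile n m) w i : sg w = sg i -> (w < i)%N ->
  (forall u : 'I_n, sg u = sg i -> (w < u)%N -> (u < i)%N -> False) ->
  st sg i = cp sg w.
Proof.
move=> ew wi H; rewrite (st_split ew wi).
have -> : [seq u <- enum 'I_n | (sg u == sg i) && (w < u)%N && (u < i)%N] = [::].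
  rewrite -(filter_pred0 (enum 'I_n)); apply: eq_filter => u /=.
  apply/negbTE/negP => /andP[/andP[/eqP h1 h2] h3]; exact: H u h1 h2 h3.
by [].
Qed.

Lemma st_zero (sg : profile n m) i :
  (forall u : 'I_n, sg u = sg i -> (u < i)%N -> False) -> st sg i = 0.
Proof.
move=> H; rewrite /start_time pred_eq.
have -> : [seq u <- enum 'I_n | (sg u == sg i) && (u < i)%N] = [::].
  rewrite -(filter_pred0 (enum 'I_n)); apply: eq_filter => u /=.
  apply/negbTE/negP => /andP[/eqP h1 h2]; exact: H u h1 h2.
by [].
Qed.

Lemma cp_dev (sg : profile n m) (i : 'I_n) (j : 'I_m) (w : 'I_n) : (w < i)%N -> cp (deviate sg i j) w = cp sg w.
Proof.
move=> wi.
suff e : st (deviate sg i j) w = st sg w by rewrite !cp_eq e.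
rewrite /start_time !pred_eq; congr foldl; apply: eq_filter => u.
rewrite /deviate !ffunE.
have -> : (w == i) = false by apply/negbTE; rewrite neq_ltn wi.
case: (ltnP u w) => uw; rewrite ?andbT ?andbF //.
by have -> : (u == i) = false by apply/negbTE; rewrite neq_ltn (ltn_trans uw wi).
Qed.

End Gen.

Lemma mod_gap (m u v : nat) : (0 < m)%N -> (u %% m = v %% m)%N -> (u < v)%N -> (u + m <= v)%N.
Proof.
move=> m0 e uv.
have : (m %| v - u)%N by rewrite -eqn_mod_dvd ?(ltnW uv) // e.
move/dvdn_leq; rewrite subn_gt0 => /(_ uv); lia.
Qed.

Section Conc.
Variables (R : realType) (n m : nat) (a : R).
Hypotheses (Hm : (1 < m)%N) (ha : 0 < a).
Let Hm0 : (0 < m)%N := ltnW Hm.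
Definition bb (i : 'I_n) : R := if (i < m)%N then 1 else 0.
Let ha0 : 0 <= a := ltW ha.
Lemma two_a : 1 <= 2 + a :> R. Proof. Show. have := ha. lra. Qed.
Lemma bb_ge0 i : 0 <= bb i. Proof. by rewrite /bb; case: ifP. Qed.

Local Notation s1 := (fun _ : 'I_m => (1:R)).
Local Notation pp := (fun i t => bb i + a * t).
Local Notation st := (start_time s1 pp 1%g).
Local Notation cp := (completion s1 pp 1%g).

Definition sgA : profile n m := [ffun i : 'I_n => Ordinal (ltn_pmod i Hm0)].

Lemma sgA_eq (u v : 'I_n) : (sgA u = sgA v) <-> (u %% m = v %% m)%N.
Proof.
rewrite /sgA !ffunE; split => [e|e]; first by move: (congr1 val e).
exact: val_inj.
Qed.

Lemma cpA (i : 'I_n) : cp sgA i = (1 + a) ^+ (i %/ m).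
Proof.
have [k] := ubnP i; elim: k i => [|k IH] i // ik.
case: (ltnP i m) => im.
  have st0 : st sgA i = 0.
    apply: (st_zero a bb) => u /sgA_eq e ui.
    rewrite (modn_small im) (modn_small (ltn_trans ui im)) in e.
    by rewrite e ltnn in ui.
  by rewrite cp_eq st0 /bb im divn_small // mulr0 add0r addr0 expr0.
have wlt : (i - m < n)%N by apply: leq_ltn_trans (leq_subr m i) (ltn_ord i).
pose w : 'I_n := Ordinal wlt.
have ew : sgA w = sgA i by apply/sgA_eq => /=; rewrite -{2}(subnK im) modnDr.
have wi : (w < i)%N by rewrite /= ltn_subrL Hm0 (leq_trans Hm0 im).
rewrite cp_eq (st_imm a bb ew wi); last first.
  move=> u /sgA_eq e /= wu ui.
  have := mod_gap Hm0 e ui; lia.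
rewrite IH; last by rewrite /=; lia.
have hb : bb i = 0 by rewrite /bb ltnNge im.
rewrite hb add0r /=.
have -> : (i %/ m = (i - m) %/ m + 1)%N.
  by rewrite -{1}(subnK im) divnDr ?dvdnn // divnn Hm0.
by rewrite exprD expr1 mulrDr mulr1 mulrC.
Qed.


Lemma stA0 (i : 'I_n) : (i < m)%N -> st sgA i = 0.
Proof.
move=> im; apply: (st_zero a bb) => u /sgA_eq e ui.
rewrite (modn_small im) (modn_small (ltn_trans ui im)) in e.
by rewrite e ltnn in ui.
Qed.

Lemma stA (i : 'I_n) : (m <= i)%N -> st sgA i = (1 + a) ^+ (i %/ m - 1).
Proof.
move=> im.
have wlt : (i - m < n)%N by apply: leq_ltn_trans (leq_subr m i) (ltn_ord i).
pose w : 'I_n := Ordinal wlt.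
have ew : sgA w = sgA i by apply/sgA_eq => /=; rewrite -{2}(subnK im) modnDr.
have wi : (w < i)%N by rewrite /= ltn_subrL Hm0 (leq_trans Hm0 im).
rewrite (st_imm a bb ew wi); last first.
  move=> u /sgA_eq e /= wu ui.
  have := mod_gap Hm0 e ui; lia.
rewrite cpA /=; congr (_ ^+ _).
by rewrite -{2}(subnK im) divnDr ?dvdnn // divnn Hm0 addnK.
Qed.

Lemma NE_A : is_NE s1 pp 1%g sgA.
Proof.
apply/forallP => i; apply/forallP => j.
set dv := deviate sgA i j.
suff h : st sgA i <= st dv i.
  by rewrite !cp_eq lerD // lerD // ler_wpM2l.
case: (ltnP i m) => im.
  by rewrite stA0 // (st_ge0 ha0 bb_ge0).
rewrite stA //.
have q1 : (0 < i %/ m)%N by rewrite divn_gt0.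
have jm : (j < m)%N := ltn_ord j.
have qi : (i %/ m * m <= i)%N := leq_trunc_div i m.
have wlt : ((i %/ m).-1 * m + j < n)%N.
  apply: (leq_trans _ (ltn_ord i)); apply: (leq_trans _ qi).
  by move: q1; case: (i %/ m)%N => [|q] //= _; rewrite mulSn; lia.
pose w : 'I_n := Ordinal wlt.
have wi : (w < i)%N.
  apply: (leq_trans _ qi); rewrite /=.
  by move: q1; case: (i %/ m)%N => [|q] //= _; rewrite mulSn; lia.
have ew : dv w = dv i.
  rewrite /dv /deviate !ffunE eqxx.
  have -> : (w == i) = false by apply/negbTE; rewrite neq_ltn wi.
  apply: val_inj => /=.
  by rewrite modnMDl modn_small.
apply: le_trans (st_ge ha0 bb_ge0 ew wi).
by rewrite cp_dev // cpA /= divnMDl // (divn_small jm) addn0 subn1.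
Qed.

Definition sgB : profile n m :=
  [ffun i : 'I_n => if (i < m)%N then Ordinal Hm0 else Ordinal Hm].

Lemma sgB_eq (u v : 'I_n) : (sgB u = sgB v) <-> ((u < m)%N = (v < m)%N).
Proof.
rewrite /sgB !ffunE; split.
  by case: (u < m)%N; case: (v < m)%N => // /(congr1 val).
by move=> ->.
Qed.

Lemma cpB (i : 'I_n) : cp sgB i <= (2 + a) ^+ m /\ ((m <= i)%N -> cp sgB i = 0)
   /\ ((i < m)%N -> cp sgB i <= (2 + a) ^+ i.+1).
Proof.
have [k] := ubnP i; elim: k i => [|k IH] i // ik.
have X : (m <= i)%N -> cp sgB i = 0.
  move=> im.
  have hb : bb i = 0 by rewrite /bb ltnNge im.
  suff : st sgB i = 0 by move=> e; rewrite cp_eq e hb mulr0 !addr0.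
  case: (eqVneq (val i) m) => [eim | nim].
    apply: (st_zero a bb) => u /sgB_eq e ui.
    by move: e; rewrite -eim ltnn ui.
  have wlt : (i.-1 < n)%N by apply: leq_ltn_trans (leq_pred i) (ltn_ord i).
  pose w : 'I_n := Ordinal wlt.
  have mi : (m < i)%N by rewrite ltn_neqAle eq_sym nim.
  have ew : sgB w = sgB i by apply/sgB_eq => /=; rewrite !ltnNge im; apply/negbTE; rewrite -ltnNge; lia.
  have wi : (w < i)%N by rewrite /=; lia.
  rewrite (st_imm a bb ew wi); last by move=> u _ /= h1 h2; lia.
  have [_ [H _]] := IH w ltac:(rewrite /=; lia).
  by rewrite H //=; lia.
have Y : (i < m)%N -> cp sgB i <= (2 + a) ^+ i.+1.
  move=> im.
  have hb : bb i = 1 by rewrite /bb im.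
  have a2 : 1 <= 2 + a by rewrite -subr_ge0 addrAC (_ : 2 - 1 = 1 :> R) ?addr_ge0 //; lra.
  case: (posnP i) => [i0 | ip].
    have st0 : st sgB i = 0.
      by apply: (st_zero a bb) => u _; rewrite i0.
    by rewrite cp_eq st0 hb mulr0 !addr0 add0r i0 expr1.
  have wlt : (i.-1 < n)%N by apply: leq_ltn_trans (leq_pred i) (ltn_ord i).
  pose w : 'I_n := Ordinal wlt.
  have ew : sgB w = sgB i by apply/sgB_eq => /=; rewrite im; apply: leq_ltn_trans (leq_pred i) im.
  have wi : (w < i)%N by rewrite /=; lia.
  rewrite cp_eq hb (st_imm a bb ew wi); last by move=> u _ /= h1 h2; lia.
  have [_ [_ h]] := IH w ltac:(rewrite /=; lia).
  have := h ltac:(rewrite /=; lia); rewrite /= prednK // => h'.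
  have s0 : 0 <= cp sgB w by rewrite cp_eq addr_ge0 ?(st_ge0 ha0 bb_ge0) // addr_ge0 ?bb_ge0 // mulr_ge0 // (st_ge0 ha0 bb_ge0).
  have X1 : 1 <= (2 + a) ^+ i by apply: exprn_ege1.
  rewrite exprS; set Z := (2 + a) ^+ i in X1 h' *; set c := cp sgB w in s0 h' *.
  nra.
split; last by split.
case: (ltnP i m) => im.
  apply: le_trans (Y im) _; apply: ler_weXn2l; [exact: two_a | exact: im].
rewrite X // exprn_ge0 //; have := ha; lra.
Qed.

End Conc.

Unset Implicit Arguments.
Set Strict Implicit.

Theorem theorem10 (R : realType) (m : nat) (a : R) :
  (2 <= m)%N -> 0 < a ->
  exists c : R, 0 < c /\
    forall n : nat, (2 * m + 1 <= n)%N ->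
      exists (b : 'I_n -> R) (pi : {perm 'I_n}),
        (forall i, 0 <= b i) /\
        c * (1 + a) `^ (n%:R / m%:R) <=
          PoA (fun _ : 'I_m => 1) (fun i t => b i + a * t) pi.
Proof.
move=> Hm ha.
have a1 : 0 < 1 + a by lra.
have a2 : 0 < 2 + a by lra.
have T0 : 0 < (2 + a) ^+ m by apply: exprn_gt0.
exists ((1 + a) * (2 + a) ^+ m)^-1; split; first by rewrite invr_gt0 mulr_gt0.
move=> n hn.
have hn0 : (0 < n)%N by lia.
exists (bb R m), 1%g; split; first exact: bb_ge0.
set s1 := (fun _ : 'I_m => 1 : R).
set pp := (fun (i : 'I_n) t => bb R m i + a * t).
pose q := ((n - 1) %/ m)%N.
have ln : (n.-1 < n)%N by lia.
pose last : 'I_n := Ordinal ln.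
have mkA : (1 + a) ^+ q <= makespan s1 pp 1%g (sgA n Hm).
  have := cpA Hm ha last; rewrite /= -subn1 => <-.
  exact: le_bigmax.
have mkB : makespan s1 pp 1%g (sgB n Hm) <= (2 + a) ^+ m.
  apply: bigmax_le; first exact: ltW.
  by move=> i _; have [] := cpB Hm ha i.
have ge1 : forall sg, 1 <= makespan s1 pp 1%g sg.
  move=> sg; pose j0 : 'I_n := Ordinal hn0.
  apply: le_trans (le_bigmax _ _ j0).
  rewrite cp_eq /bb /= (ltnW Hm).
  have := st_ge0 (ltW ha) (@bb_ge0 R n m) sg j0.
  set x := start_time _ _ _ _ _ => hx; nra.
have OPTle : OPT s1 pp 1%g <= (2 + a) ^+ m.
  by apply: le_trans _ mkB; rewrite /OPT; apply: bigmin_le.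
have OPTge : 1 <= OPT s1 pp 1%g.
  apply: le_bigmin => //.
  exact: le_trans (ge1 (sgB n Hm)) (le_bigmax _ _ (sgB n Hm)).
have O0 : 0 < OPT s1 pp 1%g by apply: lt_le_trans OPTge; lra.
have PoAge : makespan s1 pp 1%g (sgA n Hm) / OPT s1 pp 1%g <= PoA s1 pp 1%g.
  by apply: (le_bigmax_cond _ _ (NE_A n Hm ha)).
apply: le_trans PoAge.
have E : n%:R / m%:R <= (q.+1)%:R :> R.
  rewrite ler_pdivrMr ?ltr0n; last by lia.
  rewrite -natrM ler_nat.
  have := ltn_ceil (n - 1) (ltnW Hm); rewrite -/q; lia.
have P : (1 + a) `^ (n%:R / m%:R) <= (1 + a) ^+ q.+1.
  rewrite -powR_mulrn; last by lra.
  by apply: ler_powR => //; lra.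
apply: le_trans (ler_wpM2l _ P) _; first by rewrite invr_ge0 ltW // mulr_gt0.
rewrite exprS invfM mulrAC mulrA mulVf ?gt_eqF // mul1r mulrC.
apply: le_trans (_ : (1 + a) ^+ q / OPT s1 pp 1%g <= _).
  rewrite [X in X <= _]mulrC; apply: ler_wpM2l; first by rewrite exprn_ge0 // ltW.
  by rewrite lef_pV2 // posrE.
by apply: ler_wpM2r => //; rewrite invr_ge0 ltW.
Qed.
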